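(* For every $n\ge2$, $|QB(n)|\le\lfloor\log_2 n\rfloor$.
   Context: Bifurcating trees: rooted trees in which every internal node has exactly two children; $\mathcal{T}_n$ is the set of isomorphism classes of bifurcating trees with $n$ leaves. The Colless index is $\mathcal{C}(T)=\sum_{v}|\kappa_T(v_1)-\kappa_T(v_2)|$, summed over internal nodes $v$ with children $v_1,v_2$, where $\kappa_T(w)$ is the number of leaves descending from $w$; $c_n=\min\{\mathcal{C}(T):T\in\mathcal{T}_n\}$. For $n\ge2$, $QB(n)=\{(n_a,n_b)\in\mathbb{N}^2: n_a\ge n_b\ge1,\ n_a+n_b=n,\ c_{n_a}+c_{n_b}+n_a-n_b=c_n\}$. *)

(* Defs.v *)
From Stdlib Require Import ClassicalDescription.
From mathcomp Require Import all_boot.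
Set Implicit Arguments. Unset Strict Implicit. Unset Printing Implicit Defensive.

(* Rooted bifurcating trees (as plane trees; the Colless index and leaf count
   are invariant under isomorphism, so minimizing over all trees equals
   minimizing over isomorphism classes). *)
Inductive btree : Type := Leaf | Node of btree & btree.

Fixpoint leaves (T : btree) : nat :=
  match T with Leaf => 1 | Node a b => leaves a + leaves b end.

Definition absdiff (m n : nat) : nat := (m - n) + (n - m).

Fixpoint colless (T : btree) : nat :=
  match T with
  | Leaf => 0
  | Node a b => colless a + colless b + absdiff (leaves a) (leaves b)
  end.

Fixpoint caterpillar (k : nat) : btree :=
  match k with 0 => Leaf | k'.+1 => Node (caterpillar k') Leaf end.

Lemma leaves_caterpillar k : leaves (caterpillar k) = k.+1.
Proof. by elim: k => //= k ->; rewrite addn1. Qed.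

Definition colless_attained (n k : nat) : bool :=
  if excluded_middle_informative (exists T, leaves T = n /\ colless T = k)
  then true else false.

Lemma colless_attained_ex n : exists k, colless_attained n.+1 k.
Proof.
exists (colless (caterpillar n)); rewrite /colless_attained.
case: excluded_middle_informative => // H; exfalso; apply: H.
by exists (caterpillar n); rewrite leaves_caterpillar.
Qed.

(* c_n = min { C(T) : T has n leaves }, for n >= 1 (c_0 := 0, unused) *)
Definition cmin (n : nat) : nat :=
  match n with 0 => 0 | n'.+1 => ex_minn (colless_attained_ex n') end.

(* QB(n) = {(n_a, n_b) : n_a >= n_b >= 1, n_a + n_b = n,
            c_{n_a} + c_{n_b} + n_a - n_b = c_n};
   components are bounded by n since n_a + n_b = n. *)
Definition QB (n : nat) : {set 'I_n.+1 * 'I_n.+1} :=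
  [set p : 'I_n.+1 * 'I_n.+1 |
    let na := nat_of_ord p.1 in let nb := nat_of_ord p.2 in
    [&& nb <= na, 1 <= nb, na + nb == n &
        cmin na + cmin nb + (na - nb) == cmin n]].

(* Main.v *)
Require Import Defs.
From Stdlib Require Import ClassicalDescription.
From mathcomp Require Import all_boot.
From mathcomp Require Import zify.
Set Implicit Arguments. Unset Strict Implicit. Unset Printing Implicit Defensive.

Fixpoint gf (k n : nat) : nat :=
  if k is k'.+1 then
    (if n <= 1 then 0 else gf k' (uphalf n) + gf k' n./2 + odd n)
  else 0.

Definition g n := gf n n.

Lemma gf_stable k1 k2 n : n <= k1 -> n <= k2 -> gf k1 n = gf k2 n.
Proof.
elim: k1 k2 n => [|k1 IH] [|k2] n /= h1 h2; first by [].
- by move: h1; rewrite leqn0 => /eqP->.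
- by move: h2; rewrite leqn0 => /eqP->.
case: ifP => // hn.
have hu : uphalf n <= k1 by rewrite uphalf_half; lia.
have hu2 : uphalf n <= k2 by rewrite uphalf_half; lia.
rewrite (IH k2 (uphalf n)) // (IH k2 n./2) //; lia.
Qed.

Lemma g_rec n : 1 < n -> g n = g (uphalf n) + g n./2 + odd n.
Proof.
move=> hn; rewrite /g; case: n hn => [//|n] hn /=.
rewrite leqNgt hn /=.
rewrite (@gf_stable n (uphalf n.+1) (uphalf n.+1)) /=; last 2 first.
- lia.
- by [].
rewrite (@gf_stable n n.+1./2 n.+1./2) //; lia.
Qed.

Lemma g0 : g 0 = 0. Proof. by []. Qed.
Lemma g1 : g 1 = 0. Proof. by []. Qed.

Lemma g_double x : g x.*2 = (g x).*2.
Proof.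
case: x => [//|x]; rewrite g_rec; last by rewrite doubleS.
rewrite uphalf_double half_double odd_double addn0 -addnn //.
Qed.

Lemma g_odd x : 0 < x -> g (x.*2.+1) = g x + g x.+1 + 1.
Proof.
move=> hx; rewrite g_rec; last by lia.
rewrite /= uphalf_double half_double odd_double /=; lia.
Qed.

Definition S a b := g a + g b + absdiff a b.

Lemma par a : exists x, a = x.*2 \/ a = x.*2.+1.
Proof.
exists a./2; case: (boolP (odd a)) => h; [right|left]; lia.
Qed.

Lemma S_sym a b : S a b = S b a.
Proof. rewrite /S /absdiff; lia. Qed.

Lemma g_le : forall n a b, a + b <= n -> g (a + b) <= S a b.
Proof.
elim=> [|n IH] a b hab.
  have -> : a = 0 by lia. have -> : b = 0 by lia. by [].
have IH' : forall a b, a + b < n.+1 -> g (a + b) <= S a b.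
  by move=> a' b' h; apply: IH; lia.
have [hlt|heq] : a + b < n.+1 \/ a + b = n.+1 by lia.
  exact: IH'.
suff key : forall a b, a + b = n.+1 -> (odd b -> odd a) -> g (a + b) <= S a b.
  case: (boolP (odd a)) => ha; first by apply: key.
  case: (boolP (odd b)) => hb.
    rewrite addnC S_sym; apply: key; first lia.
    by rewrite (negbTE ha).
  apply: key => //.
  by rewrite (negbTE hb).
clear a b hab heq; move=> a b hab hpar.
  case: (posnP a) => [->|ha]; first by rewrite add0n /S /absdiff g0; lia.
  case: (posnP b) => [->|hb]; first by rewrite addn0 /S /absdiff g0; lia.
  have [x [ex|ex]] := par a; have [y [ey|ey]] := par b; subst a b.
  - have := IH' x y ltac:(lia).
    rewrite -doubleD g_double /S !g_double /absdiff; lia.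
  - by move: hpar; rewrite /= !odd_double => /(_ isT).
  - have -> : x.*2.+1 + y.*2 = (x + y).*2.+1 by rewrite doubleD; lia.
    rewrite /S.
    case: (posnP x) => [ex0|hx0].
      subst x; rewrite add0n.
      have e1 : g (0.*2.+1) = 0 by [].
      rewrite g_odd; last by lia.
      have := IH' y 1 ltac:(lia); rewrite e1 g_double /S /absdiff /= addn1=> h; rewrite g1 in h; lia.
    rewrite !g_odd //; last by lia.
    have := IH' x y ltac:(lia); have := IH' x.+1 y ltac:(lia).
    rewrite g_double /S /absdiff addSn; lia.
  - have -> : x.*2.+1 + y.*2.+1 = (x + y).+1.*2 by rewrite doubleS doubleD; lia.
    rewrite g_double /S.
    case: (posnP x) => [ex0|hx0].
      subst x; rewrite ?add0n.
      case: (posnP y) => [->|hy0]; first by [].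
      have e1 : g (0.*2.+1) = 0 by [].
      rewrite g_odd //.
      have := IH' y 1 ltac:(lia); rewrite /S g1 /absdiff addn1=> h. lia.
    case: (posnP y) => [ey0|hy0].
      subst y; rewrite ?addn0.
      have e1 : g (0.*2.+1) = 0 by [].
      rewrite g_odd //.
      have := IH' x 1 ltac:(lia); rewrite /S g1 /absdiff addn1=> h; lia.
    rewrite !g_odd //.
    have := IH' x y.+1 ltac:(lia); have := IH' x.+1 y ltac:(lia).
    rewrite /S /absdiff ?addnS ?addSn => h1 h2; lia.
Qed.

Lemma g_leS a b : g (a + b) <= S a b.
Proof. exact: (@g_le (a + b)). Qed.

Definition Zr a b := g (a + b) == S a b.

Lemma Zr_sym a b : Zr a b = Zr b a.
Proof. by rewrite /Zr addnC S_sym. Qed.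

Lemma Zr_double u v : Zr u.*2 v.*2 = Zr u v.
Proof.
rewrite /Zr -doubleD g_double /S !g_double /absdiff.
apply/eqP/eqP; lia.
Qed.

Lemma Zr_oe x y : 0 < x -> Zr x.*2.+1 y.*2 -> Zr x.+1 y && Zr x y.
Proof.
move=> hx; rewrite /Zr.
have -> : x.*2.+1 + y.*2 = (x + y).*2.+1 by rewrite doubleD; lia.
rewrite g_odd; last by lia.
have := g_leS x.+1 y; have := g_leS x y.
rewrite /S g_odd // g_double /absdiff addSn => h1 h2 /eqP h.
apply/andP; split; apply/eqP; lia.
Qed.

Lemma Zr_oo x y : 0 < x -> 0 < y -> Zr x.*2.+1 y.*2.+1 -> x = y.
Proof.
move=> hx hy; rewrite /Zr.
have -> : x.*2.+1 + y.*2.+1 = (x + y).+1.*2 by rewrite doubleS doubleD; lia.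
rewrite g_double.
have := g_leS x.+1 y; have := g_leS x y.+1.
rewrite /S !g_odd // /absdiff addSn addnS => h1 h2 /eqP h.
lia.
Qed.

Lemma Zr_1o y : 0 < y -> ~~ Zr 1 y.*2.+1.
Proof.
move=> hy; rewrite /Zr.
have -> : 1 + y.*2.+1 = y.+1.*2 by rewrite doubleS; lia.
rewrite g_double.
have := g_leS y 1.
rewrite /S g_odd // g1 /absdiff addn1 => h1; apply/eqP; lia.
Qed.

Lemma Zr_1e y : 1 < y -> ~~ Zr 1 y.*2.
Proof.
move=> hy; rewrite /Zr.
have -> : 1 + y.*2 = y.*2.+1 by lia.
have := g_leS y 1.
rewrite /S g_odd; last by lia.
rewrite g1 g_double /absdiff addn1 => h1; apply/eqP; lia.
Qed.

Lemma Zr_odd a b : odd a -> odd b -> Zr a b -> a = b.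
Proof.
move=> ha hb.
have [x ex] : exists x, a = x.*2.+1 by exists a./2; lia.
have [y ey] : exists y, b = y.*2.+1 by exists b./2; lia.
subst a b.
case: (posnP x) => [->|hx].
  case: (posnP y) => [->//|hy].
  by move/negP: (Zr_1o hy).
case: (posnP y) => [ey|hy].
  subst y; rewrite Zr_sym.
  by move/negP: (Zr_1o hx).
by move/(Zr_oo hx hy)->.
Qed.

Definition Vs s := [seq x <- iota 1 s.-1 | Zr x (s - x) && Zr x.+1 (s - x)].

Lemma Vs_sub s : 1 < s ->
  {subset Vs s <= s./2 :: map (fun u => u.*2 + odd s) (Vs s./2)}.
Proof.
move=> hs x; rewrite mem_filter mem_iota => /andP[/andP[Z1 Z2] /andP[h1 h2]].
rewrite inE; apply/orP.
have [u [ex|ex]] := par x; have [v [ey|ey]] := par (s - x); rewrite ey in Z1 Z2.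
- right; apply/mapP; exists u; last by lia.
  rewrite ex in Z1 Z2; rewrite Zr_double in Z1.
  have hu : 0 < u by lia.
  have /andP[Z3 _] := Zr_oe hu Z2.
  have e : s./2 - u = v by lia.
  by rewrite mem_filter mem_iota e Z1 Z3 /=; lia.
- left; rewrite ex in Z2.
  have := @Zr_odd (u.*2.+1) (v.*2.+1) ltac:(by rewrite /= odd_double) ltac:(by rewrite /= odd_double) Z2; lia.
- rewrite ex in Z1 Z2.
  have : Zr u.+1 v by rewrite -Zr_double doubleS.
  move=> Z3.
  case: (posnP u) => [eu|hu].
    subst u.
    have : v <= 1.
      case: (leqP v 1) => // hv.
      by move/negP: (Zr_1e hv).
    move=> hv; left; lia.
  right; apply/mapP; exists u; last by lia.
  have /andP[_ Z4] := Zr_oe hu Z1.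
  have e : s./2 - u = v by lia.
  by rewrite mem_filter mem_iota e Z3 Z4 /=; lia.
- left; rewrite ex in Z1.
  have := @Zr_odd (u.*2.+1) (v.*2.+1) ltac:(by rewrite /= odd_double) ltac:(by rewrite /= odd_double) Z1; lia.
Qed.

Lemma size_Vs s : size (Vs s) <= trunc_log 2 s.
Proof.
elim/ltn_ind: s => s IH.
case: (leqP s 1) => hs.
  by case: s hs {IH} => [|[|]].
rewrite trunc_log2S //.
have hu : uniq (Vs s) by rewrite filter_uniq // iota_uniq.
apply: leq_trans (uniq_leq_size hu (Vs_sub hs)) _.
rewrite /= size_map ltnS; apply: IH; lia.
Qed.

Definition Bs n := [seq b <- iota 1 n./2 | Zr (n - b) b].

Lemma size_Bs n : size (Bs n) <= trunc_log 2 n.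
Proof.
elim/ltn_ind: n => n IH.
case: (leqP n 1) => hn.
  by case: n hn {IH} => [|[|]].
have hu : uniq (Bs n) by rewrite filter_uniq // iota_uniq.
case: (boolP (odd n)) => hodd; last first.
  have sub : {subset Bs n <= n./2 :: map double (Bs n./2)}.
    move=> b; rewrite mem_filter mem_iota => /andP[Z /andP[h1 h2]].
    rewrite inE; apply/orP.
    have [v [eb|eb]] := par b.
    - right; apply/mapP; exists v => //.
      have e : n - b = (n./2 - v).*2 by lia.
      rewrite e eb Zr_double in Z.
      rewrite mem_filter mem_iota Z /=; lia.
    - left.
      have := @Zr_odd (n - b) b ltac:(lia) ltac:(lia) Z; lia.
  apply: leq_trans (uniq_leq_size hu sub) _.
  rewrite /= size_map trunc_log2S // ltnS; apply: IH; lia.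
case: (leqP n 3) => hn3.
  rewrite size_filter; apply: leq_trans (count_size _ _) _; rewrite size_iota.
  have -> : n = 3 by lia. by [].
set s := n./2.
pose h b := if odd b then b./2 else s - b./2.
have sub : {subset map h (Bs n) <= Vs s}.
  move=> x /mapP[b]; rewrite mem_filter mem_iota => /andP[Z /andP[h1 h2]] ->.
  rewrite /h.
  have [v [eb|eb]] := par b.
  - rewrite eb odd_double half_double.
    have e : n - b = (s - v).*2.+1 by rewrite /s; lia.
    rewrite e eb in Z.
    have /andP[Z1 Z2] := Zr_oe (ltac:(rewrite /s; lia) : 0 < s - v) Z.
    have e2 : s - (s - v) = v by rewrite /s; lia.
    rewrite mem_filter mem_iota e2 Z1 Z2 /=; rewrite /s; lia.
  - rewrite eb /= odd_double /= uphalf_double.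
    have e : n - b = (s - v).*2 by rewrite /s; lia.
    rewrite e eb Zr_sym in Z.
    case: (posnP v) => [ev|hv].
      subst v; have hs2 : 1 < s - 0 by rewrite /s; lia.
      by move/negP: (Zr_1e hs2).
    have /andP[Z1 Z2] := Zr_oe hv Z.
    have e2 : s - v = s - v by [].
    rewrite mem_filter mem_iota Z1 Z2 /=; rewrite /s; lia.
have hinj : {in Bs n &, injective h}.
  move=> b1 b2; rewrite !mem_filter !mem_iota => /andP[_ /andP[h1 h2]] /andP[_ /andP[h3 h4]].
  rewrite /h /s; case: (boolP (odd b1)); case: (boolP (odd b2)); lia.
have hu2 : uniq (map h (Bs n)) by rewrite (map_inj_in_uniq hinj).
have := uniq_leq_size hu2 sub; rewrite size_map => H.
apply: leq_trans H _; apply: leq_trans (size_Vs s) _.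
by apply: leq_trunc_log; rewrite /s; lia.
Qed.

Lemma colless_lb T : g (leaves T) <= colless T.
Proof.
elim: T => [//|a IHa b IHb] /=.
apply: leq_trans (g_leS _ _) _; rewrite /S; lia.
Qed.

Lemma colless_ex n : 0 < n -> exists T, leaves T = n /\ colless T = g n.
Proof.
elim/ltn_ind: n => n IH hn.
case: (leqP n 1) => h1.
  by exists Leaf; have -> : n = 1 by lia.
have [T1 [l1 c1]] := IH (uphalf n) ltac:(rewrite uphalf_half; lia) ltac:(rewrite uphalf_half; lia).
have [T2 [l2 c2]] := IH n./2 ltac:(lia) ltac:(lia).
exists (Node T1 T2); rewrite /= l1 l2 c1 c2 (g_rec h1) !uphalf_half.
split; first lia.
rewrite /absdiff; lia.
Qed.

Lemma cmin_g n : 0 < n -> cmin n = g n.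
Proof.
case: n => [//|n] _ /=.
case: ex_minnP => m Hm Hmin.
move: Hm; rewrite /colless_attained.
case: excluded_middle_informative => // [[T [lT cT]]] _.
apply/eqP; rewrite eqn_leq; apply/andP; split.
  apply: Hmin; rewrite /colless_attained.
  case: excluded_middle_informative => // H; exfalso; apply: H.
  exact: colless_ex.
by rewrite -cT -lT colless_lb.
Qed.

Theorem corollary6 (n : nat) : 2 <= n -> #|QB n| <= trunc_log 2 n.
Proof.
move=> hn.
apply: leq_trans (size_Bs n).
rewrite cardE -(size_map (fun p : 'I_n.+1 * 'I_n.+1 => val p.2)).
apply: uniq_leq_size.
  rewrite map_inj_in_uniq ?enum_uniq //.
  move=> [a1 b1] [a2 b2]; rewrite !mem_enum !inE /= => /andP[_ /andP[_ /andP[/eqP e1 _]]].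
  move=> /andP[_ /andP[_ /andP[/eqP e2 _]]] eb.
  have ea : a1 = a2 by apply: val_inj; move: e1 e2; rewrite eb => e1 e2 /=; lia.
  by rewrite ea (val_inj eb).
move=> b /mapP[[a c]]; rewrite mem_enum inE /= => /and4P[h1 h2 /eqP h3 /eqP h4] ->.
rewrite mem_filter mem_iota.
have e : n - c = a by lia.
rewrite e /Zr /S.
have -> : g (a + c) = g n by congr g.
have ga : g a = cmin a by rewrite cmin_g //; lia.
have gc : g c = cmin c by rewrite cmin_g //; lia.
have gn : g n = cmin n by rewrite cmin_g //; lia.
rewrite ga gc gn.
apply/and3P; split; [apply/eqP; rewrite /absdiff; lia | lia | lia].
Qed.
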